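(* If $\rho$ is an invariant state supported on $\Omega=\{|-\rangle,|+\rangle,\varphi_{0_1},\varphi_{0_N}\}^\perp$, then $\rho Z_k=e^{\beta_k}Z_k\rho$ for all $k=1,\dots,N-1$.
   Context: Fix integers $N\ge 2$ and $n_1\ge n_2\ge\dots\ge n_N\ge 1$. Let $\mathcal H$ be a finite-dimensional complex Hilbert space with orthonormal basis $\{|-\rangle,|+\rangle\}\cup\{|a_k\rangle:1\le k\le N,\ 0\le a\le n_k-1\}$. For vectors $x,y$, $|x\rangle\langle y|$ denotes the operator $u\mapsto\langle y,u\rangle x$. Put $E_k=\mathrm{span}\{|a_k\rangle:0\le a\le n_k-1\}$, $P_k$ the orthogonal projection onto $E_k$, $P_\pm=|\pm\rangle\langle\pm|$, $\zeta_k=e^{2\pi i/n_k}$, and $\varphi_{a_k}=n_k^{-1/2}\sum_{b=0}^{n_k-1}\zeta_k^{-ba}|b_k\rangle$ for $0\le a\le n_k-1$. For $1\le k\le N-1$ let $Z_k=n_k^{-1/2}\sum_{b=0}^{n_{k+1}-1}\sum_{a=0}^{n_k-1}\zeta_k^{ba}|b_{k+1}\rangle\langle a_k|$ (an operator on $\mathcal H$), $|Z|_k=Z_k^*Z_k$. Let $\omega$ range over the set $\{\omega_+,\omega_-,\omega_1,\dots,\omega_{N-1}\}$ of (distinct) Bohr frequencies, and let $\Gamma_{\pm,\omega}>0$, $\gamma_{\pm,\omega}\in\mathbb R$ be constants. Kraus operators: $L_{-,\omega_+}=\sqrt{n_1\Gamma_{-,\omega_+}}|\varphi_{0_1}\rangle\langle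 +|$, $L_{+,\omega_+}=\sqrt{n_1\Gamma_{+,\omega_+}}|+\rangle\langle\varphi_{0_1}|$, $L_{-,\omega_k}=\sqrt{\Gamma_{-,\omega_k}}Z_k$, $L_{+,\omega_k}=\sqrt{\Gamma_{+,\omega_k}}Z_k^*$ ($1\le k\le N-1$), $L_{-,\omega_-}=\sqrt{\Gamma_{-,\omega_-}}|-\rangle\langle\varphi_{0_N}|$, $L_{+,\omega_-}=0$. Effective Hamiltonian $H_{\mathrm{eff}}=n_1\gamma_{-,\omega_+}P_+-n_1\gamma_{+,\omega_+}|\varphi_{0_1}\rangle\langle\varphi_{0_1}|+\gamma_{-,\omega_-}|\varphi_{0_N}\rangle\langle\varphi_{0_N}|-\gamma_{+,\omega_-}P_-+\sum_{k=1}^{N-1}(\gamma_{-,\omega_k}|Z|_k-\gamma_{+,\omega_k}P_{k+1})$. The generator is $\mathcal L(\rho)=-i[H_{\mathrm{eff}},\rho]+\sum_{\omega}\sum_{\epsilon=\pm}\big(L_{\epsilon,\omega}\rho L_{\epsilon,\omega}^*-\tfrac12\{L_{\epsilon,\omega}^*L_{\epsilon,\omega},\rho\}\big)$. A state is a positive operator of trace one; it is invariant if $\mathcal L(\rho)=0$; an operator is supported on a subspace $E$ if its range is contained in $E$. Define $\beta_k$ by $e^{\beta_k}=\Gamma_{-,\omega_k}/\Gamma_{+,\omega_k}$ for $1\le k\le N-1$. *)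

(* Defs.v *)
(* Operators on the finite-dimensional Hilbert space
   are represented as matrices  idx -> idx -> R[i]  indexed by the orthonormal
   basis  {|->, |+>} U {|a_k>}. *)
From HB Require Import structures.
From mathcomp Require Import all_boot all_order all_algebra.
From mathcomp Require Import complex.
From mathcomp Require Import reals sequences exp trigo.
Unset Printing Implicit Defensive.
Import Order.TTheory GRing.Theory Num.Theory.
Local Open Scope ring_scope.
Local Open Scope complex_scope.

Section Model.
Context {R : realType}.
Local Notation C := R[i].

(* Number of sites N and site dimensions n_1, ..., n_N.  [n] is indexed by the
   paper's (1-based) site index k; values outside 1..N are irrelevant. *)
Context {N : nat} {n : nat -> nat}.

(* Basis labels: inl false = |->, inl true = |+>,
   inr (existT k a) = |a_{k+1}>  with k : 'I_N (so paper site = val k + 1)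
   and a : 'I_(n_{k+1}). *)
Definition idx : finType := (bool + {k : 'I_N & 'I_(n k.+1)})%type.

Definition vec := idx -> C.
Definition op := idx -> idx -> C.

Definition inner (x y : vec) : C := \sum_(i : idx) (x i)^* * y i.
Definition ketbra (x y : vec) : op := fun i j => x i * (y j)^*.
Definition apply (A : op) (v : vec) : vec := fun i => \sum_(j : idx) A i j * v j.
Definition mulo (A B : op) : op := fun i j => \sum_(l : idx) A i l * B l j.
Definition adj (A : op) : op := fun i j => (A j i)^*.
Definition addo (A B : op) : op := fun i j => A i j + B i j.
Definition subo (A B : op) : op := fun i j => A i j - B i j.
Definition scaleo (c : C) (A : op) : op := fun i j => c * A i j.
Definition zeroo : op := fun _ _ => 0.
Definition trace (A : op) : C := \sum_(i : idx) A i i.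

Definition ket_minus : vec := fun j => (j == inl false)%:R.
Definition ket_plus : vec := fun j => (j == inl true)%:R.
(* |b_k> (paper 1-based site index k) *)
Definition ket_site (k b : nat) : vec := fun j =>
  match j with
  | inl _ => 0
  | inr (existT k' b') => (((val k').+1 == k) && (val b' == b))%:R
  end.

Definition zeta (m : nat) : C :=
  (cos (2 * pi / m%:R))%:C + 'i * (sin (2 * pi / m%:R))%:C.

Definition sqrtC (x : R) : C := (Num.sqrt x)%:C.

Definition phi (k a : nat) : vec := fun j =>
  (sqrtC (n k)%:R)^-1 * \sum_(b < n k) zeta (n k) ^- (b * a) * ket_site k b j.

Definition Zop (k : nat) : op := fun i j =>
  (sqrtC (n k)%:R)^-1 *
  \sum_(b < n k.+1) \sum_(a < n k)
     zeta (n k) ^+ (b * a) * ketbra (ket_site k.+1 b) (ket_site k a) i j.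

Definition absZ (k : nat) : op := mulo (adj (Zop k)) (Zop k).

Definition Pk (k : nat) : op := fun i j =>
  \sum_(a < n k) ketbra (ket_site k a) (ket_site k a) i j.
Definition Pplus : op := ketbra ket_plus ket_plus.
Definition Pminus : op := ketbra ket_minus ket_minus.

(* The constants Gamma_{eps,omega} and gamma_{eps,omega}.  The rates for
   omega_k (1 <= k <= N-1) are given as functions of k. *)
Record constants := Constants {
  Gm_plus : R;
  Gp_plus : R;
  Gm_minus : R;
  Gp_minus : R;
  Gm : nat -> R;
  Gp : nat -> R;
  gm_plus : R;
  gp_plus : R;
  gm_minus : R;
  gp_minus : R;
  gm : nat -> R;
  gp : nat -> R
}.

Definition constants_ok (c : constants) : Prop :=
  [/\ 0 < Gm_plus c, 0 < Gp_plus c, 0 < Gm_minus c, 0 < Gp_minus c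
    & forall k, (1 <= k <= N - 1)%N -> 0 < Gm c k /\ 0 < Gp c k].

Variable c : constants.

Definition L_m_plus : op :=
  scaleo (sqrtC ((n 1)%:R * Gm_plus c)) (ketbra (phi 1 0) ket_plus).
Definition L_p_plus : op :=
  scaleo (sqrtC ((n 1)%:R * Gp_plus c)) (ketbra ket_plus (phi 1 0)).
Definition L_m (k : nat) : op := scaleo (sqrtC (Gm c k)) (Zop k).
Definition L_p (k : nat) : op := scaleo (sqrtC (Gp c k)) (adj (Zop k)).
Definition L_m_minus : op :=
  scaleo (sqrtC (Gm_minus c)) (ketbra ket_minus (phi N 0)).
Definition L_p_minus : op := zeroo.

Definition Heff : op := fun i j =>
  ((n 1)%:R * gm_plus c)%:C * Pplus i j
  - ((n 1)%:R * gp_plus c)%:C * ketbra (phi 1 0) (phi 1 0) i j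
  + (gm_minus c)%:C * ketbra (phi N 0) (phi N 0) i j
  - (gp_minus c)%:C * Pminus i j
  + \sum_(1 <= k < N) ((gm c k)%:C * absZ k i j - (gp c k)%:C * Pk k.+1 i j).

Definition diss (L rho : op) : op := fun i j =>
  mulo (mulo L rho) (adj L) i j
  - 2^-1 * (mulo (mulo (adj L) L) rho i j + mulo rho (mulo (adj L) L) i j).

Definition commo (A B : op) : op := fun i j => mulo A B i j - mulo B A i j.

Definition gen (rho : op) : op := fun i j =>
  - 'i * commo Heff rho i j
  + (diss L_m_plus rho i j + diss L_p_plus rho i j)
  + \sum_(1 <= k < N) (diss (L_m k) rho i j + diss (L_p k) rho i j)
  + (diss L_m_minus rho i j + diss L_p_minus rho i j).

Definition is_invariant (rho : op) : Prop := gen rho = zeroo.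

End Model.

Arguments constants R : clear implicits.
Arguments idx : clear implicits.
Arguments vec R N n : clear implicits.
Arguments op R N n : clear implicits.
Arguments Constants {R}.
Arguments constants_ok {R} N c.

Definition positive_op {R : realType} {N n} (A : op R N n) : Prop :=
  forall v : vec R N n, 0 <= inner v (apply A v).
Definition is_state {R : realType} {N n} (rho : op R N n) : Prop :=
  positive_op rho /\ trace rho = 1.

Definition perp {R : realType} {N n} (S : vec R N n -> Prop) (v : vec R N n) : Prop :=
  forall w, S w -> inner w v = 0.
Definition supported_on {R : realType} {N n} (A : op R N n) (E : vec R N n -> Prop) :=
  forall u, E (apply A u).

Definition Omega {R : realType} {N n} (w : vec R N n) : Prop :=
  w = ket_minus \/ w = ket_plus \/ w = phi 1 0 \/ w = phi N 0.

Definition beta {R : realType} (c : constants R) (k : nat) : R :=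
  ln (Gm c k / Gp c k).

(* Main.v *)
Require Import Defs.
From HB Require Import structures.
From mathcomp Require Import all_boot all_order all_algebra.
From mathcomp Require Import complex ring zify.
From mathcomp Require Import boolp reals sequences exp trigo.
Import Order.TTheory GRing.Theory Num.Theory.
Local Open Scope ring_scope.
Local Open Scope complex_scope.

Section Alg.
Variable R : realType.
Variable N : nat.
Variable n : nat -> nat.
Local Notation C := R[i].
Local Notation I := (idx N n).
Local Notation O := (op R N n).

Lemma opext (A B : O) : (forall i j, A i j = B i j) -> A = B.
Proof. by move=> H; apply: funext => i; apply: funext => j; apply: H. Qed.

Lemma sum_delta (a : I) (F : I -> C) : \sum_(l : I) (l == a)%:R * F l = F a.
Proof.
rewrite (bigD1 a) //= eqxx mul1r big1 ?addr0 // => l /negbTE ->; by rewrite mul0r.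
Qed.

Lemma sum_deltar (a : I) (F : I -> C) : \sum_(l : I) F l * (l == a)%:R = F a.
Proof. rewrite -[RHS]sum_delta; apply: eq_bigr => l _; by rewrite mulrC. Qed.

Lemma mulA (A B D : O) : mulo (mulo A B) D = mulo A (mulo B D).
Proof.
apply: opext => i j; rewrite /mulo.
under eq_bigr do rewrite mulr_suml.
rewrite exchange_big /=; apply: eq_bigr => l _.
rewrite mulr_sumr; apply: eq_bigr => m _; by rewrite mulrA.
Qed.

Lemma trC (A B : O) : trace (mulo A B) = trace (mulo B A).
Proof.
rewrite /trace /mulo exchange_big /=; apply: eq_bigr => i _.
apply: eq_bigr => j _; by rewrite mulrC.
Qed.

Lemma adjM (A B : O) : adj (mulo A B) = mulo (adj B) (adj A).
Proof.
apply: opext => i j; rewrite /adj /mulo rmorph_sum; apply: eq_bigr => l _.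
by rewrite rmorphM mulrC.
Qed.

Lemma adjK (A : O) : adj (adj A) = A.
Proof. by apply: opext => i j; rewrite /adj conjcK. Qed.

Lemma mulDr (A B D : O) : mulo A (addo B D) = addo (mulo A B) (mulo A D).
Proof. apply: opext => i j; rewrite /mulo /addo -big_split; apply: eq_bigr => l _; by rewrite mulrDr. Qed.
Lemma mulDl (A B D : O) : mulo (addo A B) D = addo (mulo A D) (mulo B D).
Proof. apply: opext => i j; rewrite /mulo /addo -big_split; apply: eq_bigr => l _; by rewrite mulrDl. Qed.
Lemma mulBr (A B D : O) : mulo A (subo B D) = subo (mulo A B) (mulo A D).
Proof. apply: opext => i j; rewrite /mulo /subo -sumrB; apply: eq_bigr => l _; by rewrite mulrBr. Qed.
Lemma mulBl (A B D : O) : mulo (subo A B) D = subo (mulo A D) (mulo B D).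
Proof. apply: opext => i j; rewrite /mulo /subo -sumrB; apply: eq_bigr => l _; by rewrite mulrBl. Qed.
Lemma mulZl (c : C) (A B : O) : mulo (scaleo c A) B = scaleo c (mulo A B).
Proof. apply: opext => i j; rewrite /mulo /scaleo mulr_sumr; apply: eq_bigr => l _; by rewrite mulrA. Qed.
Lemma mulZr (c : C) (A B : O) : mulo A (scaleo c B) = scaleo c (mulo A B).
Proof. apply: opext => i j; rewrite /mulo /scaleo mulr_sumr; apply: eq_bigr => l _; by rewrite mulrCA. Qed.
Lemma mul0o (A : O) : mulo zeroo A = zeroo.
Proof. apply: opext => i j; rewrite /mulo big1 // => l _; by rewrite mul0r. Qed.
Lemma mulo0 (A : O) : mulo A zeroo = zeroo.
Proof. apply: opext => i j; rewrite /mulo big1 // => l _; by rewrite mulr0. Qed.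
Lemma adj0 : adj (zeroo : O) = zeroo.
Proof. by apply: opext => i j; rewrite /adj conjc0. Qed.
Lemma adjZ c (A : O) : adj (scaleo c A) = scaleo c^* (adj A).
Proof. by apply: opext => i j; rewrite /adj /scaleo rmorphM. Qed.
Lemma adjB (A B : O) : adj (subo A B) = subo (adj A) (adj B).
Proof. by apply: opext => i j; rewrite /adj /subo rmorphB. Qed.

Lemma trD (A B : O) : trace (addo A B) = trace A + trace B.
Proof. by rewrite /trace /addo big_split. Qed.
Lemma trB (A B : O) : trace (subo A B) = trace A - trace B.
Proof. by rewrite /trace /subo sumrB. Qed.
Lemma trZ c (A : O) : trace (scaleo c A) = c * trace A.
Proof. by rewrite /trace /scaleo mulr_sumr. Qed.
Lemma tr0 : trace (zeroo : O) = 0.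
Proof. by rewrite /trace big1. Qed.

Definition sumk (F : nat -> O) : O := fun i j => \sum_(1 <= k < N) F k i j.
Lemma mul_sumk (A : O) F : mulo A (sumk F) = sumk (fun k => mulo A (F k)).
Proof.
apply: opext => i j; rewrite /mulo /sumk.
under eq_bigr do rewrite mulr_sumr.
by rewrite exchange_big.
Qed.
Lemma tr_sumk F : trace (sumk F) = \sum_(1 <= k < N) trace (F k).
Proof. by rewrite /trace /sumk exchange_big. Qed.

Definition nrm (Y : O) : C := trace (mulo Y (adj Y)).
Lemma nrmE (Y : O) : nrm Y = \sum_i \sum_l Y i l * (Y i l)^*.
Proof. by []. Qed.
Lemma nrm_ge0 (Y : O) : 0 <= nrm Y.
Proof. rewrite nrmE; apply: sumr_ge0 => i _; apply: sumr_ge0 => l _; exact: mul_conjC_ge0. Qed.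
Lemma nrm_eq0 (Y : O) : nrm Y = 0 -> Y = zeroo.
Proof.
rewrite nrmE => /eqP; rewrite psumr_eq0; last by move=> i _; apply: sumr_ge0 => l _; exact: mul_conjC_ge0.
move=> /allP H; apply: opext => i j.
have := H i (mem_index_enum i); rewrite /= psumr_eq0; last by move=> l _; exact: mul_conjC_ge0.
move=> /allP /(_ j (mem_index_enum j)) /=.
by rewrite mul_conjC_eq0 => /eqP.
Qed.

Definition D (f : I -> C) : O := fun i j => (i == j)%:R * f i.
Lemma mulDo f (A : O) : mulo (D f) A = fun i j => f i * A i j.
Proof.
apply: opext => i j; rewrite /mulo /D.
rewrite -[RHS](sum_delta i (fun l => f l * A l j)).
apply: eq_bigr => l _; rewrite eq_sym; case: eqP => [->|_]; by rewrite ?mul0r ?mul1r.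
Qed.
Lemma muloD f (A : O) : mulo A (D f) = fun i j => A i j * f j.
Proof.
apply: opext => i j; rewrite /mulo /D.
rewrite -[RHS](sum_deltar j (fun l => A i l * f l)).
apply: eq_bigr => l _; case: eqP => [->|_]; by rewrite ?mul0r ?mulr0 ?mul1r ?mulr1.
Qed.
Lemma adjD f : (forall i, (f i)^* = f i) -> adj (D f) = D f.
Proof.
move=> Hf; apply: opext => i j; rewrite /adj /D.
case: (eqVneq i j) => [->|h]; rewrite ?eqxx ?(negbTE h) ?(eq_sym j i) ?(negbTE h); by rewrite ?mulr1n ?mulr0n ?mul1r ?mul0r ?Hf ?conjc0.
Qed.

Definition site (i : I) : nat :=
  match i with inl _ => 0%N | inr (existT k _) => (val k).+1 end.

Definition maps (p q : nat) (L : O) :=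
  (forall i j, site i != q -> L i j = 0) /\ (forall i j, site j != p -> L i j = 0).

Lemma maps_adj {p q : nat} {L : O} : maps p q L -> maps q p (adj L).
Proof.
case=> H1 H2; split=> i j h; rewrite /adj; [rewrite H2 //|rewrite H1 //]; exact: conjc0.
Qed.

Lemma mulD_maps (g : nat -> C) {p q : nat} {L : O} : maps p q L ->
  mulo (D (fun i => g (site i))) L = scaleo (g q) L.
Proof.
case=> H1 _; rewrite mulDo; apply: opext => i j; rewrite /scaleo.
case: (eqVneq (site i) q) => [->//|h]; by rewrite H1 // !mulr0.
Qed.
Lemma mul_mapsD (g : nat -> C) {p q : nat} {L : O} : maps p q L ->
  mulo L (D (fun i => g (site i))) = scaleo (g p) L.
Proof.
case=> _ H2; rewrite muloD; apply: opext => i j; rewrite /scaleo.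
case: (eqVneq (site j) p) => [->|h]; first by rewrite mulrC.
by rewrite H2 // !mulr0 mul0r.
Qed.

Definition blk (H : O) := forall i j, site i != site j -> H i j = 0.
Lemma blk_comm (g : nat -> C) H : blk H ->
  mulo (D (fun i => g (site i))) H = mulo H (D (fun i => g (site i))).
Proof.
move=> Hb; rewrite mulDo muloD; apply: opext => i j.
case: (eqVneq (site i) (site j)) => [->|h]; first by rewrite mulrC.
by rewrite Hb // mulr0 mul0r.
Qed.


Local Notation "A ** B" := (mulo A B) (at level 40, left associativity).
Definition Ds (g : nat -> C) : O := D (fun i => g (site i)).

Lemma Ds_l (g : nat -> C) {p q : nat} {L X : O} : maps p q L ->
  Ds g ** (L ** X) = scaleo (g q) (L ** X).
Proof. by move=> h; rewrite -mulA /Ds (mulD_maps g h) mulZl. Qed.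
Lemma Ds_r (g : nat -> C) {p q : nat} {L : O} : maps p q L -> L ** Ds g = scaleo (g p) L.
Proof. by move=> h; rewrite /Ds (mul_mapsD g h). Qed.
Lemma Ds_idem (g : nat -> C) X : (forall t, g t * g t = g t) ->
  Ds g ** (Ds g ** X) = Ds g ** X.
Proof.
move=> h; rewrite -mulA; congr mulo; rewrite /Ds mulDo /D; apply: opext => i j.
by rewrite mulrCA h.
Qed.
Lemma adjDs (g : nat -> C) : (forall t, (g t)^* = g t) -> adj (Ds g) = Ds g.
Proof. by move=> h; rewrite /Ds adjD. Qed.

Variable rho : O.
Hypothesis rhoH : adj rho = rho.

Definition Psi (A B X : O) : C :=
  trace ((A ** rho ** B) ** X) + trace ((B ** rho ** A) ** X).

Lemma PsiD A B X Y : Psi A B (addo X Y) = Psi A B X + Psi A B Y.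
Proof. rewrite /Psi !mulDr !trD; ring. Qed.
Lemma PsiB A B X Y : Psi A B (subo X Y) = Psi A B X - Psi A B Y.
Proof. rewrite /Psi !mulBr !trB; ring. Qed.
Lemma PsiZ A B c X : Psi A B (scaleo c X) = c * Psi A B X.
Proof. rewrite /Psi !mulZr !trZ; ring. Qed.
Lemma Psi_sumk A B F : Psi A B (sumk F) = \sum_(1 <= k < N) Psi A B (F k).
Proof. by rewrite /Psi !mul_sumk !tr_sumk -big_split. Qed.
Lemma Psi0 A B : Psi A B zeroo = 0.
Proof. by rewrite /Psi !mulo0 tr0 addr0. Qed.

Lemma comm_aux A B H : A ** H = H ** A ->
  trace ((A ** rho ** B) ** (rho ** H)) = trace ((B ** rho ** A) ** (H ** rho)).
Proof.
move=> hA.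
by rewrite !mulA trC !mulA -hA [LHS]trC !mulA.
Qed.

Lemma Psi_comm A B H : A ** H = H ** A -> B ** H = H ** B ->
  Psi A B (commo H rho) = 0.
Proof.
move=> hA hB.
have -> : commo H rho = subo (H ** rho) (rho ** H) by [].
rewrite PsiB /Psi (comm_aux A B H hA) (comm_aux B A H hB); ring.
Qed.


Lemma jump_aux ga gb {p q : nat} {L : O} : maps p q L ->
  trace ((Ds ga ** rho ** Ds gb) ** ((L ** rho) ** adj L)) =
  gb q * ga q * trace (rho ** (L ** (rho ** adj L))).
Proof.
move=> hL.
rewrite !mulA (Ds_l gb hL) !mulZr trZ trC !mulA (Ds_r ga (maps_adj hL)).
by rewrite !mulZr trZ mulrA.
Qed.

Lemma adj_nrm_form L g : (forall t, (g t)^* = g t) ->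
  adj (L ** (rho ** Ds g)) = Ds g ** (rho ** adj L).
Proof. by move=> h; rewrite !adjM adjDs // rhoH mulA. Qed.

Lemma T1_aux ga gb {p q : nat} {L : O} : maps p q L ->
  (forall t, ga t * ga t = ga t) -> (forall t, (ga t)^* = ga t) ->
  trace ((Ds ga ** rho ** Ds gb) ** ((adj L ** L) ** rho)) =
  gb p * nrm ((L ** rho) ** Ds ga).
Proof.
move=> hL hi hr.
rewrite !mulA (Ds_l gb (maps_adj hL)) !mulZr trZ; congr (_ * _).
rewrite /nrm adj_nrm_form // !mulA Ds_idem //.
by rewrite [RHS]trC !mulA [RHS]trC !mulA.
Qed.

Lemma T3_aux ga gb {p q : nat} {L : O} : maps p q L ->
  (forall t, gb t * gb t = gb t) -> (forall t, (gb t)^* = gb t) ->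
  trace ((Ds ga ** rho ** Ds gb) ** (rho ** (adj L ** L))) =
  ga p * nrm ((L ** rho) ** Ds gb).
Proof.
move=> hL hi hr.
rewrite !mulA trC !mulA (Ds_r ga hL) !mulZr trZ; congr (_ * _).
rewrite /nrm adj_nrm_form // !mulA Ds_idem //.
by rewrite [RHS]trC !mulA.
Qed.

Lemma dissE L : diss L rho =
  subo ((L ** rho) ** adj L)
       (scaleo 2^-1 (addo ((adj L ** L) ** rho) (rho ** (adj L ** L)))).
Proof. by []. Qed.

Lemma Psi_diss1 ga gb {p q : nat} {L : O} : maps p q L ->
  ga q * gb q = 0 ->
  (forall t, ga t * ga t = ga t) -> (forall t, (ga t)^* = ga t) ->
  (forall t, gb t * gb t = gb t) -> (forall t, (gb t)^* = gb t) ->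
  Psi (Ds ga) (Ds gb) (diss L rho) =
  - (gb p * nrm ((L ** rho) ** Ds ga) + ga p * nrm ((L ** rho) ** Ds gb)).
Proof.
move=> hL h0 hai har hbi hbr.
rewrite dissE PsiB PsiZ PsiD /Psi !(jump_aux _ _ hL).
rewrite (T1_aux _ _ hL hai har) (T1_aux _ _ hL hbi hbr).
rewrite (T3_aux _ _ hL hbi hbr) (T3_aux _ _ hL hai har).
by rewrite [gb q * ga q]mulrC h0; field.
Qed.


Definition one : nat -> C := fun _ => 1.
Lemma Ds1l X : Ds one ** X = X.
Proof. by rewrite /Ds mulDo; apply: opext => i j; rewrite /one mul1r. Qed.
Lemma Ds1r X : X ** Ds one = X.
Proof. by rewrite /Ds muloD; apply: opext => i j; rewrite /one mulr1. Qed.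
Lemma one_idem t : one t * one t = one t. Proof. by rewrite /one mulr1. Qed.
Lemma one_real t : (one t)^* = one t. Proof. by rewrite /one conjc1. Qed.

Definition pp (p : nat) : nat -> C := fun t => (t == p)%:R.
Lemma Ds_pp (w : nat -> C) p X : Ds w ** (Ds (pp p) ** X) = scaleo (w p) (Ds (pp p) ** X).
Proof.
rewrite -mulA -mulZl; congr mulo; rewrite /Ds !mulDo /D /pp; apply: opext => i j.
rewrite /scaleo; case: (eqVneq (site i) p) => [->|h] //; by rewrite ?mulr0n !mulr0.
Qed.

Lemma nrm_rot L : nrm (L ** rho) = trace (rho ** (adj L ** (L ** rho))).
Proof. by rewrite /nrm adjM rhoH !mulA trC !mulA trC !mulA. Qed.

Lemma V1_aux w p L : Ds (pp p) ** (rho ** adj L) = rho ** adj L ->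
  trace (Ds w ** (rho ** (adj L ** (L ** rho)))) = w p * nrm (L ** rho).
Proof.
move=> hP.
rewrite -(mulA rho (adj L)) -hP !mulA Ds_pp trZ; congr (_ * _).
by rewrite -(mulA rho (adj L)) -(mulA (Ds (pp p))) hP nrm_rot mulA.
Qed.

Lemma Psi_diss2 (w : nat -> C) {p q : nat} {L : O} : maps p q L ->
  (forall t, (w t)^* = w t) ->
  Ds (pp p) ** (rho ** adj L) = rho ** adj L ->
  Psi (Ds w) (Ds one) (diss L rho) =
  2 * w q * trace (rho ** (L ** (rho ** adj L))) - 2 * w p * nrm (L ** rho).
Proof.
move=> hL hr hP.
rewrite dissE PsiB PsiZ PsiD /Psi !(jump_aux _ _ hL).
rewrite (T1_aux _ _ hL one_idem one_real) (T3_aux _ _ hL one_idem one_real) !Ds1r.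
rewrite !Ds1l /one !mul1r !mulr1.
have -> : trace (Ds w ** rho ** (adj L ** L ** rho)) = w p * nrm (L ** rho).
  by rewrite !mulA (V1_aux w _ _ hP).
have -> : trace (rho ** Ds w ** (rho ** (adj L ** L))) = w p * nrm (L ** rho).
  by rewrite !mulA trC !mulA (V1_aux w _ _ hP).
by field.
Qed.


Lemma s_adj L : trace (rho ** (adj L ** (rho ** adj (adj L)))) =
                trace (rho ** (L ** (rho ** adj L))).
Proof. by rewrite adjK trC !mulA trC !mulA. Qed.

Lemma nrm_Y (Z : O) (e : C) : e^* = e ->
  nrm (subo (rho ** Z) (scaleo e (Z ** rho))) =
  nrm (adj Z ** rho) - 2 * e * trace (rho ** (Z ** (rho ** adj Z))) + e * e * nrm (Z ** rho).
Proof.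
move=> he.
rewrite /nrm adjB adjZ !adjM rhoH he adjK !mulBl !mulBr !mulZl !mulZr !trB !trZ.
have -> : trace (rho ** Z ** (adj Z ** rho)) = trace (adj Z ** rho ** (rho ** Z)) by rewrite trC.
have -> : trace (rho ** Z ** (rho ** adj Z)) = trace (rho ** (Z ** (rho ** adj Z))) by rewrite !mulA.
have -> : trace (Z ** rho ** (adj Z ** rho)) = trace (rho ** (Z ** (rho ** adj Z))) by rewrite [RHS]trC !mulA.
ring.
Qed.

Lemma conv_hP L p : (L ** rho) ** Ds (fun t => (t != p)%:R) = zeroo ->
  Ds (pp p) ** (rho ** adj L) = rho ** adj L.
Proof.
move=> h; have E : rho ** adj L = adj (L ** rho) by rewrite adjM rhoH.
rewrite E /Ds mulDo; apply: opext => i j; rewrite /pp.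
case: (eqVneq (site i) p) => [_|hi]; first by rewrite mul1r.
have := congr1 (fun M => M j i) h; rewrite muloD /zeroo /= hi mulr1 /adj => ->.
by rewrite conjc0 mulr0.
Qed.


Lemma ket_site0 s b (i : I) : site i != s -> (@ket_site R N n s b i) = 0.
Proof.
case: i => [x|[k' b']] /= h; first by [].
by rewrite (negbTE h).
Qed.

Lemma maps_Z k : maps k k.+1 (Zop k : O).
Proof.
split => i j h; rewrite /Zop big1 ?mulr0 // => b _; rewrite big1 // => a _; rewrite /ketbra.
  by rewrite (ket_site0 _ _ _ h) mul0r mulr0.
by rewrite (ket_site0 _ _ _ h) rmorph0 !mulr0.
Qed.

Definition supp s (v : vec R N n) := forall i, site i != s -> v i = 0.

Lemma ketbra_blk {s : nat} {x y : vec R N n} : supp s x -> supp s y ->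
  forall i j, site i != site j -> ketbra x y i j = 0.
Proof.
move=> hx hy i j h; rewrite /ketbra.
case: (eqVneq (site i) s) => [e|hi]; last by rewrite hx // mul0r.
have hj : site j != s by rewrite -e eq_sym.
by rewrite (hy j hj) rmorph0 mulr0.
Qed.

Lemma supp_plus : supp 0 ket_plus.
Proof. by case=> [x|[k' b']] //= h; rewrite /ket_plus. Qed.
Lemma supp_minus : supp 0 ket_minus.
Proof. by case=> [x|[k' b']] //= h; rewrite /ket_minus. Qed.
Lemma supp_site s b : supp s (ket_site s b).
Proof. by move=> i h; rewrite ket_site0. Qed.
Lemma supp_phi s a : supp s (phi s a).
Proof.
move=> i h; rewrite /phi big1 ?mulr0 // => b _; by rewrite ket_site0 // mulr0.
Qed.

Lemma blk_Heff c : blk (Heff c : O).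
Proof.
move=> i j h; rewrite /Heff /Pplus /Pminus.
rewrite (ketbra_blk supp_plus supp_plus _ _ h) (ketbra_blk (supp_phi 1 0) (supp_phi 1 0) _ _ h).
rewrite (ketbra_blk (supp_phi N 0) (supp_phi N 0) _ _ h) (ketbra_blk supp_minus supp_minus _ _ h).
rewrite !mulr0 !subr0 !addr0 add0r big1 // => k _.
have -> : @absZ R N n k i j = 0.
  rewrite /absZ /mulo big1 // => l _; rewrite /adj.
  case: (eqVneq (site i) k) => [e|hi]; last by rewrite (proj2 (maps_Z k)) // conjc0 mul0r.
  by rewrite (proj2 (maps_Z k) l j) ?mulr0 // -e eq_sym.
have -> : @Pk R N n k.+1 i j = 0.
  by rewrite /Pk big1 // => a _; rewrite (ketbra_blk (supp_site k.+1 a) (supp_site k.+1 a) _ _ h).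
by rewrite !mulr0 subr0.
Qed.


Lemma ge0_conj (z : C) : 0 <= z -> z^* = z.
Proof. by move=> h; have := ger0_real h; rewrite CrealE => /eqP. Qed.

Lemma ci : ('i : C)^* = - 'i.
Proof. by apply/eqP; rewrite eq_complex /= oppr0 !eqxx. Qed.
Lemma ci2 : ('i : C) * 'i = - 1.
Proof. by apply/eqP; rewrite eq_complex /= !mulr0 !mul0r !mulr1 sub0r addr0 oppr0 !eqxx. Qed.

Lemma quad (A : O) (a b : I) (c : C) :
  inner (fun l => (l == a)%:R + c * (l == b)%:R) (apply A (fun l => (l == a)%:R + c * (l == b)%:R))
  = A a a + c * A a b + c^* * (A b a + c * A b b).
Proof.
have E : apply A (fun l => (l == a)%:R + c * (l == b)%:R) = fun i => A i a + c * A i b.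
  apply: funext => i; rewrite /apply.
  under eq_bigr do rewrite mulrDr mulrCA.
  by rewrite big_split /= -(mulr_sumr _ _ _ c) !sum_deltar.
rewrite E /inner.
under eq_bigr do rewrite rmorphD rmorphM !rmorph_nat mulrDl mulrAC.
by rewrite big_split /= sum_delta (sum_deltar b (fun i => c^* * (A i a + c * A i b))).
Qed.

Lemma cD (a b : C) : conjc (a + b) = conjc a + conjc b. Proof. exact: rmorphD. Qed.
Lemma cB (a b : C) : conjc (a - b) = conjc a - conjc b. Proof. exact: rmorphB. Qed.
Lemma cM (a b : C) : conjc (a * b) = conjc a * conjc b. Proof. exact: rmorphM. Qed.
Lemma cN (a : C) : conjc (- a) = - conjc a. Proof. exact: rmorphN. Qed.

Lemma ciN : Num.conj ('i : C) = - 'i. Proof. exact: ci. Qed.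

Lemma herm_of_pos (A : O) : positive_op A -> adj A = A.
Proof.
move=> hp.
have hq : forall a b c, 0 <= A a a + c * A a b + Num.conj c * (A b a + c * A b b).
  by move=> a b c; have := hp (fun l => (l == a)%:R + c * (l == b)%:R); rewrite quad.
have hd : forall a, Num.conj (A a a) = A a a.
  move=> a; apply: ge0_conj; have := hq a a 0.
  by rewrite !mul0r rmorph0 !mul0r !addr0.
apply: opext => i j; rewrite /adj.
set x := A j i; set y := A i j.
have E1 : Num.conj (A j j + 1 * x + Num.conj 1 * (y + 1 * A i i)) =
          A j j + 1 * x + Num.conj 1 * (y + 1 * A i i) := ge0_conj _ (hq j i 1).
have E2 : Num.conj (A j j + 'i * x + Num.conj 'i * (y + 'i * A i i)) =
          A j j + 'i * x + Num.conj 'i * (y + 'i * A i i) := ge0_conj _ (hq j i 'i).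
rewrite ?ciN !(rmorphD, rmorphM, rmorph1, rmorphN) ?ciN ?hd ?conjCK in E1 E2.
pose K := (Num.conj : {rmorphism C -> C}).
have ha : K (A j j) = A j j := hd j.
have hb : K (A i i) = A i i := hd i.
have hi : K 'i = - 'i := ciN.
rewrite -/K in E1 E2.
rewrite ha hb in E1 E2. rewrite hi in E2.
have key : K y = x.
  have X1 : K x + K y - (x + y) = 0.
    have -> : K x + K y - (x + y) =
      (A j j + 1 * K x + 1 * (K y + 1 * A i i)) - (A j j + 1 * x + 1 * (y + 1 * A i i)) by ring.
    by rewrite E1 subrr.
  have X2 : - 'i * K x + 'i * K y - 'i * x + 'i * y = 0.
    have -> : - 'i * K x + 'i * K y - 'i * x + 'i * y =
      (A j j + - 'i * K x + - - 'i * (K y + - 'i * A i i)) -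
      (A j j + 'i * x + - 'i * (y + 'i * A i i)) by ring.
    by rewrite E2 subrr.
  have E3 : 2 * (K y - x) = 0.
    have -> : 2 * (K y - x) = (K x + K y - (x + y)) - ('i * 'i + 1) * (K x - K y + x - y)
       + (- 'i) * (- 'i * K x + 'i * K y - 'i * x + 'i * y) by ring.
    by rewrite X1 X2 ci2 addNr mul0r mulr0 subr0 addr0.
  move/eqP: E3; rewrite mulf_eq0 pnatr_eq0 /= subr_eq0 => /eqP; done.
rewrite -key; exact: (conjCK y).
Qed.


Lemma om_row (y : vec R N n) : supported_on rho (perp Omega) -> Omega y ->
  forall j, \sum_l conjc (y l) * rho l j = 0.
Proof.
move=> Hs hy j; have := Hs (fun m => (m == j)%:R) y hy.
rewrite /inner /apply.
by under eq_bigr do rewrite sum_deltar.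
Qed.

Lemma kill_L s (x y : vec R N n) : (forall j, \sum_l conjc (y l) * rho l j = 0) ->
  scaleo s (ketbra x y) ** rho = zeroo.
Proof.
move=> h; apply: opext => i j; rewrite /mulo /scaleo /ketbra /zeroo.
have -> : \sum_l s * (x i * conjc (y l)) * rho l j = s * x i * \sum_l conjc (y l) * rho l j.
  by rewrite mulr_sumr; apply: eq_bigr => l _; ring.
by rewrite h mulr0.
Qed.

Lemma diss_kill L : L ** rho = zeroo -> diss L rho = zeroo.
Proof.
move=> h; rewrite dissE h mul0o mulA h mulo0 -mulA.
have -> : rho ** adj L = zeroo by rewrite -rhoH -adjM h adj0.
rewrite mul0o; apply: opext => i j; rewrite /subo /scaleo /addo /zeroo; ring.
Qed.

Lemma diss_scale s L : diss (scaleo s L) rho = scaleo (s * conjc s) (diss L rho).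
Proof.
rewrite !dissE adjZ !mulZl !mulZr !mulZl.
apply: opext => i j; rewrite /subo /scaleo /addo; ring.
Qed.

Lemma sqrtC_sq (x : R) : 0 <= x -> Defs.sqrtC x * conjc (Defs.sqrtC x) = x%:C.
Proof.
move=> hx; rewrite /Defs.sqrtC conjc_real -rmorphM -expr2 sqr_sqrtr //.
Qed.


Lemma genE (c : constants R) : supported_on rho (perp Omega) ->
  gen c rho = addo (scaleo (- 'i) (commo (Heff c) rho))
                   (sumk (fun k => addo (diss (L_m c k) rho) (diss (L_p c k) rho))).
Proof.
move=> Hs.
have h1 : diss (L_m_plus c) rho = zeroo.
  by apply: diss_kill; apply: kill_L; apply: (om_row _ Hs); right; left.
have h2 : diss (L_p_plus c) rho = zeroo.
  by apply: diss_kill; apply: kill_L; apply: (om_row _ Hs); right; right; left.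
have h3 : diss (L_m_minus c) rho = zeroo.
  by apply: diss_kill; apply: kill_L; apply: (om_row _ Hs); right; right; right.
have h4 : diss (@L_p_minus R N n) rho = zeroo.
  by apply: diss_kill; rewrite /L_p_minus mul0o.
apply: opext => i j; rewrite /gen h1 h2 h3 h4 /zeroo /addo /scaleo /sumk.
by rewrite !addr0.
Qed.


Lemma ge0C (x : R) : 0 <= x -> 0 <= x%:C.
Proof. by move=> h; have : (0:R)%:C <= x%:C by rewrite lecR. Qed.
Lemma gt0C (x : R) : 0 < x -> 0 < x%:C.
Proof. by move=> h; have : (0:R)%:C < x%:C by rewrite ltcR. Qed.

Definition na (t : nat) : nat -> C := fun u => (u != t)%:R.
Lemma bool_idem (b : bool) : (b%:R : C) * b%:R = b%:R.
Proof. by case: b; rewrite ?mulr1n ?mulr0n ?mulr1 ?mulr0. Qed.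
Lemma bool_real (b : bool) : conjc (b%:R : C) = b%:R.
Proof. exact: conjc_nat. Qed.
Lemma bool_ge0 (b : bool) : 0 <= (b%:R : C).
Proof. exact: ler0n. Qed.

Lemma okk {c : constants R} {k : nat} : constants_ok N c -> (1 <= k < N)%N -> 0 < Gm c k /\ 0 < Gp c k.
Proof. case=> _ _ _ _ H hk; apply: H; lia. Qed.

Definition E1 c t k :=
  (Gm c k)%:C * (pp t k * nrm ((Zop k ** rho) ** Ds (na t)) + na t k * nrm ((Zop k ** rho) ** Ds (pp t)))
  + (Gp c k)%:C * (pp t k.+1 * nrm ((adj (Zop k) ** rho) ** Ds (na t))
                   + na t k.+1 * nrm ((adj (Zop k) ** rho) ** Ds (pp t))).

Lemma E1_ge0 c t k : constants_ok N c -> (1 <= k < N)%N -> 0 <= E1 c t k.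
Proof.
move=> Hc hk; have [h1 h2] := okk Hc hk.
rewrite /E1 /pp /na; apply: addr_ge0; apply: mulr_ge0;
  try (apply: ge0C; exact: ltW); apply: addr_ge0; apply: mulr_ge0;
  (exact: bool_ge0 || exact: nrm_ge0).
Qed.

Lemma step1 c t : constants_ok N c -> supported_on rho (perp Omega) -> gen c rho = zeroo ->
  forall k, (1 <= k < N)%N -> E1 c t k = 0.
Proof.
move=> Hc Hs Hinv.
have H0 : Psi (Ds (na t)) (Ds (pp t)) (gen c rho) = 0 by rewrite Hinv Psi0.
rewrite (genE _ Hs) PsiD PsiZ Psi_comm in H0; last 2 first.
  exact: (blk_comm _ _ (blk_Heff c)).
  exact: (blk_comm _ _ (blk_Heff c)).
rewrite mulr0 add0r Psi_sumk in H0.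
have Eq : \sum_(1 <= k < N) Psi (Ds (na t)) (Ds (pp t)) (addo (diss (L_m c k) rho) (diss (L_p c k) rho))
          = - \sum_(1 <= k < N) E1 c t k.
  rewrite -sumrN big_nat_cond [RHS]big_nat_cond; apply: eq_bigr => k /andP [hk _].
  have [g1 g2] := okk Hc hk.
  rewrite PsiD /L_m /L_p (diss_scale _ (Zop k)) (diss_scale _ (adj (Zop k))) !PsiZ !sqrtC_sq ?ltW //.
  have h0 : forall u, na t u * pp t u = 0.
    by move=> u; rewrite /na /pp; case: eqP; rewrite ?mulr0n ?mulr1n ?mul0r ?mulr0.
  rewrite (Psi_diss1 (na t) (pp t) (maps_Z k) (h0 _) (fun u => bool_idem _) (fun u => bool_real _)
              (fun u => bool_idem _) (fun u => bool_real _)).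
  rewrite (Psi_diss1 (na t) (pp t) (maps_adj (maps_Z k)) (h0 _) (fun u => bool_idem _) (fun u => bool_real _)
              (fun u => bool_idem _) (fun u => bool_real _)).
  rewrite /E1; ring.
rewrite Eq in H0; move/eqP: H0; rewrite oppr_eq0 => /eqP HS.
move=> k hk.
move/eqP: HS; rewrite big_nat_cond psumr_eq0; last first.
  by move=> u /andP [hu _]; exact: E1_ge0.
by move=> /allP /(_ k); rewrite mem_index_iota hk => /(_ isT) /= /eqP.
Qed.


Lemma padd0 (x y : C) : 0 <= x -> 0 <= y -> x + y = 0 -> x = 0 /\ y = 0.
Proof. by move=> hx hy /eqP; rewrite paddr_eq0 // => /andP [/eqP -> /eqP ->]. Qed.

Lemma step1_Z c k : constants_ok N c -> supported_on rho (perp Omega) -> gen c rho = zeroo ->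
  (1 <= k < N)%N -> (Zop k ** rho) ** Ds (na k) = zeroo.
Proof.
move=> Hc Hs Hinv hk; have := step1 c k Hc Hs Hinv k hk.
have [g1 g2] := okk Hc hk.
rewrite /E1 /pp /na eqxx /= (gtn_eqF (ltnSn k)) /= ?mulr1n ?mulr0n !mul1r !mul0r !addr0 add0r.
move/padd0 => [].
- by apply: mulr_ge0; [apply: ge0C; exact: ltW | exact: nrm_ge0].
- by apply: mulr_ge0; [apply: ge0C; exact: ltW | exact: nrm_ge0].
move=> /eqP; rewrite mulf_eq0 => /orP [/eqP h|/eqP h _]; last exact: nrm_eq0.
by have := gt0C _ g1; rewrite h ltxx.
Qed.

Lemma step1_Zt c k : constants_ok N c -> supported_on rho (perp Omega) -> gen c rho = zeroo ->
  (1 <= k < N)%N -> (adj (Zop k) ** rho) ** Ds (na k.+1) = zeroo.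
Proof.
move=> Hc Hs Hinv hk; have := step1 c k.+1 Hc Hs Hinv k hk.
have [g1 g2] := okk Hc hk.
rewrite /E1 /pp /na eqxx /= (ltn_eqF (ltnSn k)) /= ?mulr1n ?mulr0n !mul1r !mul0r !addr0 add0r.
move/padd0 => [].
- by apply: mulr_ge0; [apply: ge0C; exact: ltW | exact: nrm_ge0].
- by apply: mulr_ge0; [apply: ge0C; exact: ltW | exact: nrm_ge0].
move=> _ /eqP; rewrite mulf_eq0 => /orP [/eqP h|/eqP h]; last exact: nrm_eq0.
by have := gt0C _ g2; rewrite h ltxx.
Qed.


Definition wt (c : constants R) (t : nat) : R := \prod_(1 <= j < t) (Gp c j / Gm c j).
Definition wC c : nat -> C := fun t => (wt c t)%:C.
Definition Yk c k : O := subo (rho ** Zop k) (scaleo ((Gm c k / Gp c k)%:C) (Zop k ** rho)).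
Definition E2 c k := (Gp c k * wt c k.+1)%:C * nrm (Yk c k).

Lemma wt_gt0 c t : constants_ok N c -> (t <= N)%N -> 0 < wt c t.
Proof.
move=> Hc ht; rewrite /wt big_nat_cond; apply: (big_ind (fun x => 0 < x)) => //.
  exact: mulr_gt0.
move=> j /andP [hj _]; have hj' : (1 <= j < N)%N by lia.
have [a b] := okk Hc hj'; exact: divr_gt0.
Qed.

Lemma wt_S c k : (1 <= k)%N -> wt c k.+1 = wt c k * (Gp c k / Gm c k).
Proof. by move=> hk; rewrite /wt big_nat_recr. Qed.

Lemma E2_ge0 c k : constants_ok N c -> (1 <= k < N)%N -> 0 <= E2 c k.
Proof.
move=> Hc hk; have [g1 g2] := okk Hc hk.
rewrite /E2; apply: mulr_ge0; last exact: nrm_ge0.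
apply: ge0C; apply: mulr_ge0; first exact: ltW.
by apply: ltW; apply: wt_gt0 => //; lia.
Qed.

Lemma step2 c : constants_ok N c -> supported_on rho (perp Omega) -> gen c rho = zeroo ->
  forall k, (1 <= k < N)%N -> E2 c k = 0.
Proof.
move=> Hc Hs Hinv.
have H0 : Psi (Ds (wC c)) (Ds one) (gen c rho) = 0 by rewrite Hinv Psi0.
rewrite (genE _ Hs) PsiD PsiZ Psi_comm in H0; last 2 first.
  exact: (blk_comm _ _ (blk_Heff c)).
  exact: (blk_comm _ _ (blk_Heff c)).
rewrite mulr0 add0r Psi_sumk in H0.
have wr : forall u, conjc (wC c u) = wC c u by move=> u; exact: conjc_real.
have Eq : \sum_(1 <= k < N) Psi (Ds (wC c)) (Ds one) (addo (diss (L_m c k) rho) (diss (L_p c k) rho))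
          = - \sum_(1 <= k < N) (2 * E2 c k).
  rewrite -sumrN big_nat_cond [RHS]big_nat_cond; apply: eq_bigr => k /andP [hk _].
  have [g1 g2] := okk Hc hk.
  rewrite PsiD /L_m /L_p (diss_scale _ (Zop k)) (diss_scale _ (adj (Zop k))) !PsiZ !sqrtC_sq ?ltW //.
  have hP1 := conv_hP (Zop k) k (step1_Z c k Hc Hs Hinv hk).
  have hP2 := conv_hP (adj (Zop k)) k.+1 (step1_Zt c k Hc Hs Hinv hk).
  rewrite (Psi_diss2 (wC c) (maps_Z k) wr hP1) (Psi_diss2 (wC c) (maps_adj (maps_Z k)) wr hP2).
  rewrite s_adj /E2 /Yk nrm_Y; last exact: conjc_real.
  rewrite /wC wt_S; last by case/andP: hk.
  rewrite !rmorphM fmorphV.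
  have n1 : (Gm c k)%:C != 0 by rewrite lt0r_neq0 // gt0C.
  have n2 : (Gp c k)%:C != 0 by rewrite lt0r_neq0 // gt0C.
  by field; apply/andP; split; [exact: n2 | exact: n1].
rewrite Eq in H0; move/eqP: H0; rewrite oppr_eq0 => /eqP HS.
move=> k hk.
move/eqP: HS; rewrite big_nat_cond psumr_eq0; last first.
  by move=> u /andP [hu _]; apply: mulr_ge0 => //; exact: E2_ge0.
move=> /allP /(_ k); rewrite mem_index_iota hk => /(_ isT) /= /eqP.
by move/eqP; rewrite mulf_eq0 pnatr_eq0 /= => /eqP.
Qed.


Lemma main_sec c k : constants_ok N c -> supported_on rho (perp Omega) -> gen c rho = zeroo ->
  (1 <= k <= N - 1)%N ->
  mulo rho (Zop k) = scaleo (expR (beta c k))%:C (mulo (Zop k) rho).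
Proof.
move=> Hc Hs Hinv hk'; have hk : (1 <= k < N)%N by lia.
have [g1 g2] := okk Hc hk.
have := step2 c Hc Hs Hinv k hk; rewrite /E2 => /eqP; rewrite mulf_eq0 => /orP [/eqP h|/eqP h].
  have : 0 < Gp c k * wt c k.+1 by apply: mulr_gt0 => //; apply: wt_gt0 => //; lia.
  by move/(gt0C _); rewrite h ltxx.
have hY := nrm_eq0 _ h.
have hb : expR (beta c k) = Gm c k / Gp c k by rewrite /beta lnK // posrE divr_gt0.
rewrite hb; apply: opext => i j.
have := congr1 (fun M => M i j) hY; rewrite /Yk /subo /scaleo /zeroo => /eqP.
by rewrite subr_eq0 => /eqP.
Qed.

End Alg.

Theorem corollary3p9 (R : realType) (N : nat) (n : nat -> nat)
  (c : constants R)
  (HN : (2 <= N)%N)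
  (Hn_pos : forall k, (1 <= k <= N)%N -> (1 <= n k)%N)
  (Hn_dec : forall k, (1 <= k < N)%N -> (n k.+1 <= n k)%N)
  (Hc : constants_ok N c)
  (rho : op R N n)
  (Hstate : is_state rho)
  (Hinv : is_invariant c rho)
  (Hsupp : supported_on rho (perp Omega)) :
  forall k, (1 <= k <= N - 1)%N ->
    mulo rho (Zop k) = scaleo (expR (beta c k))%:C (mulo (Zop k) rho).
Proof.
move=> k hk.
have rhoH := herm_of_pos _ _ _ _ (proj1 Hstate).
exact: (main_sec _ _ _ _ rhoH c k Hc Hsupp Hinv hk).
Qed.
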